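(* In the standard LLP setup, for every $N\ge1$ and every $s\in\Sigma^*$: $f^N_{cons}(s)\subseteq f^{N+1}_{cons}(s)$.
   Context: Standard LLP setup. $\Sigma=\Sigma_c\,\dot\cup\,\Sigma_{uc}$ is a finite alphabet partitioned into controllable and uncontrollable events. The plant $G$ has generated language $L(G)$ and marked language $L_m(G)$ with $L(G)=\overline{L_m(G)}$ ($\overline{M}$ = set of prefixes of strings in $M$). The legal language $K\subseteq L_m(G)$ satisfies $K=\overline{K}\cap L_m(G)$. For a prefix-closed $L$, $M$ is controllable w.r.t. $L$ if $\overline{M}\Sigma_{uc}\cap L\subseteq\overline{M}$. For a language $L$ and $s\in\Sigma^*$: $L/s=\{t: st\in L\}$; $L|_N=\{t\in L:|t|\le N\}$. $M^{\uparrow/s|_N}$ is the supremal sublanguage of $M$ controllable w.r.t. $L(G)/s|_N$. Conservative attitude: $f^N_{cons}(s)=[K/s|_{N-1}]^{\uparrow/s|_N}$. *)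

(* Defs.v *)
From mathcomp Require Import all_boot.
Set Implicit Arguments. Unset Strict Implicit. Unset Printing Implicit Defensive.

Definition lang (Sigma : Type) := seq Sigma -> Prop.

Section Lang.
Variable Sigma : Type.
Implicit Types (L M : lang Sigma) (s t : seq Sigma).

Definition lsub L M : Prop := forall t, L t -> M t.

Definition pclos M : lang Sigma := fun t => exists u, M (t ++ u).

Definition lquot L s : lang Sigma := fun t => L (s ++ t).

Definition ltrunc L (N : nat) : lang Sigma := fun t => L t /\ size t <= N.

(* M controllable w.r.t. L (uc = the uncontrollable events):
   \overline{M} Sigma_uc \cap L \subseteq \overline{M} *)
Definition controllable (uc : pred Sigma) M L : Prop :=
  forall t e, pclos M t -> uc e -> L (rcons t e) -> pclos M (rcons t e).

Definition supC (uc : pred Sigma) M L : lang Sigma :=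
  fun t => exists M', lsub M' M /\ controllable uc M' L /\ M' t.

Definition f_cons (uc : pred Sigma) (LG K : lang Sigma) (N : nat) s
  : lang Sigma :=
  supC uc (ltrunc (lquot K s) N.-1) (ltrunc (lquot LG s) N).
End Lang.

(* Main.v *)
Require Import Defs.
From mathcomp Require Import all_boot.

Theorem mainTheorem7 (Sigma : finType) (uc : pred Sigma)
  (LG Lm K : lang Sigma)
  (hG : forall t, LG t <-> pclos Lm t)
  (hKm : lsub K Lm)
  (hK : forall t, K t <-> (pclos K t /\ Lm t))
  (N : nat) (hN : 1 <= N) (s : seq Sigma) :
  lsub (f_cons uc LG K N s) (f_cons uc LG K N.+1 s).
Proof.
move=> t [M' [hsub [hc hM]]].
exists M'; split; [|split]=> //.
- move=> x /hsub [hx hsz]; split=> //.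
  apply: leq_trans hsz _; exact: leq_pred.
- move=> x e hp he [hL _].
  apply: hc => //; split=> //.
  case: hp => u /hsub [_ hsz].
  rewrite size_cat in hsz.
  rewrite size_rcons.
  have h1 : (size x + size u <= N.-1) by exact: hsz.
  have h2 : size x <= N.-1 := leq_trans (leq_addr _ _) h1.
  by rewrite -ltnS (ltn_predK hN) in h2; exact: h2.
Qed.
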